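(* Let $G=\langle b\rangle\wr\langle a\rangle$ be the restricted wreath product of two infinite cyclic groups $\langle b\rangle\cong\langle a\rangle\cong\mathbb Z$ (so $G\cong\mathbb Z\wr\mathbb Z$). Then the bijection $f\colon\{a^n\mid n\in\mathbb N\}\to\mathbb N$, $a^n\mapsto n$, is an interpretation with parameters of $(\mathbb N,+,\times)$ in the group $(G,\cdot)$.
   Context: The restricted wreath product $\langle b\rangle\wr\langle a\rangle$ is the group $H\rtimes\langle a\rangle$ where $H$ is the free abelian group with basis $(a^{-k}ba^k)_{k\in\mathbb Z}$ and $a$ acts by conjugation shifting the basis. Groups are first-order structures in the language with one binary function symbol. An interpretation with parameters of $M$ in $N$ is a pair $(n,f)$, $f$ a surjection from a subset of $N^n$ onto $M$, such that for every $X\subseteq M^k$ definable in $M$ without parameters, the preimage of $X$ under the coordinatewise map $f^{\underline k}$ is definable in $N$ with parameters (equivalently: domain, kernel of $f$ and preimages of graphs of the basic operations of $M$ are definable with parameters). *)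

(* Defs.v *)
From Stdlib Require Import ZArith List Lia.
Import ListNotations.
Open Scope Z_scope.

(* Both languages involved, (G, .) and (N, +, x), consist only of binary
   function symbols; a signature is the type of its binary function symbols. *)

Inductive term (Sym : Type) : Type :=
| Var : nat -> term Sym
| App : Sym -> term Sym -> term Sym -> term Sym.
Arguments Var {Sym} _.
Arguments App {Sym} _ _ _.

Inductive formula (Sym : Type) : Type :=
| FEq  : term Sym -> term Sym -> formula Sym
| FNot : formula Sym -> formula Sym
| FAnd : formula Sym -> formula Sym -> formula Sym
| FOr  : formula Sym -> formula Sym -> formula Sym
| FImp : formula Sym -> formula Sym -> formula Sym
| FEx  : nat -> formula Sym -> formula Sym
| FAll : nat -> formula Sym -> formula Sym.
Arguments FEq {Sym} _ _.
Arguments FNot {Sym} _.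
Arguments FAnd {Sym} _ _.
Arguments FOr {Sym} _ _.
Arguments FImp {Sym} _ _.
Arguments FEx {Sym} _ _.
Arguments FAll {Sym} _ _.

Record structure (Sym : Type) : Type := MkStructure {
  carrier :> Type;
  interp : Sym -> carrier -> carrier -> carrier
}.
Arguments carrier {Sym} _.
Arguments interp {Sym} _ _ _ _.

Fixpoint eval {Sym : Type} (M : structure Sym) (v : nat -> carrier M)
  (t : term Sym) : carrier M :=
  match t with
  | Var n => v n
  | App s t1 t2 => interp M s (eval M v t1) (eval M v t2)
  end.

Definition upd {A : Type} (v : nat -> A) (n : nat) (x : A) : nat -> A :=
  fun i => if Nat.eqb i n then x else v i.

Fixpoint sat {Sym : Type} (M : structure Sym) (v : nat -> carrier M)
  (phi : formula Sym) : Prop :=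
  match phi with
  | FEq t1 t2 => eval M v t1 = eval M v t2
  | FNot p => ~ sat M v p
  | FAnd p q => sat M v p /\ sat M v q
  | FOr p q => sat M v p \/ sat M v q
  | FImp p q => sat M v p -> sat M v q
  | FEx n p => exists x, sat M (upd v n x) p
  | FAll n p => forall x, sat M (upd v n x) p
  end.

(** A k-ary relation on M is a predicate on lists (of length k) of elements.
    It is definable without parameters if some formula phi, with the tuple
    placed in variables 0..k-1, defines it. *)
Definition definable0 {Sym : Type} (M : structure Sym) (k : nat)
  (X : list (carrier M) -> Prop) : Prop :=
  exists phi : formula Sym,
    forall v : nat -> carrier M,
      X (map v (seq 0 k)) <-> sat M v phi.

(** Definable with parameters: the tuple in variables 0..k-1, the parameters
    ps in variables k..k+|ps|-1. *)
Definition definable_params {Sym : Type} (M : structure Sym) (k : nat)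
  (X : list (carrier M) -> Prop) : Prop :=
  exists (phi : formula Sym) (ps : list (carrier M)),
    forall v : nat -> carrier M,
      map v (seq k (length ps)) = ps ->
      (X (map v (seq 0 k)) <-> sat M v phi).

(** The i-th block of length n of a list (a point of N^(n k) viewed as a
    k-tuple of points of N^n). *)
Definition block {A : Type} (n i : nat) (xs : list A) : list A :=
  firstn n (skipn (i * n) xs).

(** The function f is given as a total function on lists;
    only its values on D matter. *)
Definition interpretation {SM SN : Type} (M : structure SM) (N : structure SN)
  (n : nat) (D : list (carrier N) -> Prop) (f : list (carrier N) -> carrier M)
  : Prop :=
  (forall x, D x -> length x = n) /\
  (forall m : carrier M, exists x, D x /\ f x = m) /\
  (forall (k : nat) (X : list (carrier M) -> Prop),
      definable0 M k X ->
      definable_params N (n * k)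
        (fun xs => (forall i, (i < k)%nat -> D (block n i xs)) /\
                   X (map (fun i => f (block n i xs)) (seq 0 k)))).

Inductive arith_sym : Type := APlus | ATimes.

Definition NatArith : structure arith_sym :=
  MkStructure arith_sym nat
    (fun s => match s with APlus => Nat.add | ATimes => Nat.mul end).

(* H = free abelian group with basis b_k = a^-k b a^k (k in Z): finitely
   supported functions Z -> Z (coefficient of b_k). *)
Definition fin_supp (h : Z -> Z) : Prop :=
  exists N : Z, forall k : Z, N < Z.abs k -> h k = 0.

Record Hgrp : Type := MkH { coef : Z -> Z; coef_supp : fin_supp coef }.

Lemma fin_supp_shift_add (h g : Z -> Z) (m : Z) :
  fin_supp h -> fin_supp g -> fin_supp (fun j => h j + g (j + m)).
Proof.
  intros [N1 H1] [N2 H2]. exists (Z.abs N1 + Z.abs N2 + Z.abs m).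
  intros k Hk. rewrite H1, H2 by lia. reflexivity.
Qed.

Lemma fin_supp_zero : fin_supp (fun _ => 0).
Proof. exists 0. reflexivity. Qed.

Lemma fin_supp_delta0 : fin_supp (fun k => if Z.eqb k 0 then 1 else 0).
Proof.
  exists 0. intros k Hk. destruct (Z.eqb_spec k 0); [lia | reflexivity].
Qed.

(* An element (h, m) stands for h * a^m.  Since a^m b_k a^-m = b_(k-m),
   (h a^m)(g a^n) = h (a^m g a^-m) a^(m+n), and the coefficient of b_j in
   a^m g a^-m is g(j+m). *)
Definition wr_mul (x y : Hgrp * Z) : Hgrp * Z :=
  (MkH (fun j => coef (fst x) j + coef (fst y) (j + snd x))
       (fin_supp_shift_add _ _ _ (coef_supp (fst x)) (coef_supp (fst y))),
   snd x + snd y).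

Inductive group_sym : Type := GMul.

Definition ZwrZ : structure group_sym :=
  MkStructure group_sym (Hgrp * Z)%type (fun _ => wr_mul).

Definition wr_one : Hgrp * Z := (MkH (fun _ => 0) fin_supp_zero, 0).
Definition wr_a : Hgrp * Z := (MkH (fun _ => 0) fin_supp_zero, 1).
Definition wr_b : Hgrp * Z := (MkH (fun k => if Z.eqb k 0 then 1 else 0) fin_supp_delta0, 0).

Definition wr_pow (x : Hgrp * Z) (n : nat) : Hgrp * Z :=
  Nat.iter n (fun y => wr_mul y x) wr_one.

Definition dom_apow (xs : list (Hgrp * Z)) : Prop :=
  exists n : nat, xs = [wr_pow wr_a n].

Definition f_apow (xs : list (Hgrp * Z)) : nat :=
  match xs with
  | [x] => Z.to_nat (snd x)
  | _ => 0%nat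
  end.

(* Main.v *)
Require Import Defs.
From Stdlib Require Import ZArith Znumtheory List Lia Arith Bool FunctionalExtensionality ProofIrrelevance.
Import ListNotations.
Open Scope Z_scope.

Lemma H_ext (x y : Hgrp) : (forall j, coef x j = coef y j) -> x = y.
Proof.
  destruct x as [cx px], y as [cy py]; simpl; intros H.
  assert (cx = cy) by (apply functional_extensionality; auto). subst.
  f_equal. apply proof_irrelevance.
Qed.

Lemma G_ext (x y : Hgrp * Z) :
  (forall j, coef (fst x) j = coef (fst y) j) -> snd x = snd y -> x = y.
Proof.
  destruct x, y; simpl; intros; f_equal; auto. apply H_ext; auto.
Qed.

Lemma G_eq_coef (x y : Hgrp * Z) : x = y -> forall j, coef (fst x) j = coef (fst y) j.
Proof. intros ->; auto. Qed.
Lemma G_eq_snd (x y : Hgrp * Z) : x = y -> snd x = snd y.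
Proof. intros ->; auto. Qed.

Lemma mul_coef x y j : coef (fst (wr_mul x y)) j = coef (fst x) j + coef (fst y) (j + snd x).
Proof. reflexivity. Qed.
Lemma mul_snd x y : snd (wr_mul x y) = snd x + snd y.
Proof. reflexivity. Qed.

Lemma fs_bound h : fin_supp h -> exists B, 0 <= B /\ forall k, B < Z.abs k -> h k = 0.
Proof. intros [B HB]. exists (Z.abs B). split; [lia|]. intros k Hk. apply HB. lia. Qed.

Lemma halfline (h : Z -> Z) (Hs : fin_supp h) (N j0 : Z) : N <> 0 ->
  (forall i : Z, 0 <= i -> h (j0 + i * N) = h (j0 + (i+1) * N)) -> h j0 = 0.
Proof.
  intros HN Hc. destruct (fs_bound h Hs) as [B [HB0 HB]].
  assert (E : forall i, 0 <= i -> h j0 = h (j0 + i*N)).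
  { intros i Hi. pattern i; apply natlike_ind; [ | | exact Hi].
    - f_equal; lia.
    - intros x Hx IH. rewrite IH, Hc by auto; f_equal; lia. }
  rewrite (E (B + Z.abs j0 + 1)) by lia. apply HB.
  destruct (Z_lt_le_dec N 0); nia.
Qed.

Lemma halfline_back (h : Z -> Z) (Hs : fin_supp h) (N j0 : Z) : N <> 0 ->
  (forall i : Z, 0 <= i -> h (j0 - i * N) = h (j0 - (i+1) * N)) -> h j0 = 0.
Proof.
  intros HN Hc. apply (halfline h Hs (-N) j0); [lia|].
  intros i Hi. specialize (Hc i Hi). replace (j0 + i * - N) with (j0 - i*N) by lia.
  replace (j0 + (i+1) * - N) with (j0 - (i+1)*N) by lia. auto.
Qed.

Lemma class0_contra (h : Z -> Z) (Hs : fin_supp h) (N : Z) : N <> 0 ->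
  (forall i : Z, h (i * N) - h ((i+1) * N) = if Z.eqb i 0 then 1 else 0) -> False.
Proof.
  intros HN Hc.
  assert (A : h N = 0).
  { apply (halfline h Hs N N HN). intros i Hi.
    specialize (Hc (i+1)). destruct (Z.eqb_spec (i+1) 0); [lia|].
    replace (N + i*N) with ((i+1)*N) by lia. replace (N + (i+1)*N) with ((i+1+1)*N) by lia. lia. }
  assert (B : h 0 = 0).
  { apply (halfline_back h Hs N 0 HN). intros i Hi.
    specialize (Hc (-(i+1))). destruct (Z.eqb_spec (-(i+1)) 0); [lia|].
    replace (0 - i*N) with ((-(i+1)+1)*N) by lia. replace (0 - (i+1)*N) with ((-(i+1))*N) by lia. lia. }
  specialize (Hc 0). replace (0*N) with 0 in Hc by ring. replace ((0+1)*N) with N in Hc by ring. simpl in Hc. lia.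
Qed.

Definition zeroH : Hgrp := MkH (fun _ => 0) fin_supp_zero.
Definition apow (n : nat) : Hgrp * Z := (zeroH, Z.of_nat n).

Lemma wr_pow_a n : wr_pow wr_a n = apow n.
Proof.
  induction n; simpl.
  - reflexivity.
  - change (Nat.iter n (fun y => wr_mul y wr_a) wr_one) with (wr_pow wr_a n). rewrite IHn.
    apply G_ext; simpl; lia.
Qed.

Definition DomS (g : Hgrp * Z) : Prop := (forall j, coef (fst g) j = 0) /\ 0 <= snd g.

Lemma DomS_apow g : DomS g <-> g = apow (Z.to_nat (snd g)).
Proof.
  split.
  - intros [H1 H2]. apply G_ext; simpl; auto. lia.
  - intros ->. split; simpl; auto; lia.
Qed.

Lemma dom_apow_iff g : dom_apow [g] <-> DomS g.
Proof.
  split.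
  - intros [n Hn]. inversion Hn. rewrite wr_pow_a. split; simpl; auto; lia.
  - intros H. exists (Z.to_nat (snd g)). rewrite wr_pow_a. f_equal. apply DomS_apow; auto.
Qed.

Definition G := (Hgrp * Z)%type.
Definition gv (n : nat) : term group_sym := Var n.
Definition gm (t1 t2 : term group_sym) : term group_sym := App GMul t1 t2.

Ltac eqb_solve := repeat match goal with
  | |- context [Nat.eqb ?i ?n] =>
      let H := fresh in
      first [ assert (H : Nat.eqb i n = true) by (apply Nat.eqb_eq; lia)
            | assert (H : Nat.eqb i n = false) by (apply Nat.eqb_neq; lia) ];
      rewrite H; clear H
  end; cbv iota beta.

Ltac eqb_solve_in H0 := repeat match type of H0 with
  | context [Nat.eqb ?i ?n] =>
      let H := fresh in
      first [ assert (H : Nat.eqb i n = true) by (apply Nat.eqb_eq; lia)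
            | assert (H : Nat.eqb i n = false) by (apply Nat.eqb_neq; lia) ];
      rewrite H in H0; clear H
  end; cbv iota beta in H0.

Lemma b_snd : snd wr_b = 0. Proof. reflexivity. Qed.
Ltac gs := rewrite ?mul_coef, ?mul_snd, ?b_snd; cbn [fst snd coef wr_a wr_b zeroH apow]; rewrite ?Z.add_0_l, ?Z.add_0_r.
Ltac gsin H := rewrite ?mul_coef, ?mul_snd, ?b_snd in H; cbn [fst snd coef wr_a wr_b zeroH apow] in H; rewrite ?Z.add_0_l, ?Z.add_0_r in H.

Definition delta0 (j : Z) : Z := if Z.eqb j 0 then 1 else 0.

Lemma b_coef j : coef (fst wr_b) j = delta0 j.
Proof. reflexivity. Qed.

Lemma isH_iff (u : G) : wr_mul u wr_b = wr_mul wr_b u <-> snd u = 0.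
Proof.
  split.
  - intros E. pose proof (G_eq_coef _ _ E (- snd u)) as C.
    gsin C.
    replace (- snd u + snd u) with 0 in C by lia. replace (- snd u + 0) with (- snd u) in C by lia.
    change (Z.eqb 0 0) with true in C. cbv iota in C.
    destruct (Z.eqb_spec (- snd u) 0); cbv iota in C; lia.
  - intros H. apply G_ext.
    + intros j. gs. rewrite H. replace (j + 0) with j by lia. lia.
    + gs. lia.
Qed.

Lemma inA_iff (x : G) : wr_mul x wr_a = wr_mul wr_a x <-> (forall j, coef (fst x) j = 0).
Proof.
  split.
  - intros E j. apply (halfline (coef (fst x)) (coef_supp (fst x)) 1 j); [lia|].
    intros i _. pose proof (G_eq_coef _ _ E (j + i*1)) as C.
    gsin C.
    replace (j + (i+1)*1) with (j + i*1 + 1) by lia. lia.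
  - intros H. apply G_ext.
    + intros j. gs. rewrite !H. lia.
    + gs. lia.
Qed.

Lemma lin_iff (x z m : G) : (forall j, coef (fst x) j = 0) -> snd z = 0 -> snd m = 0 ->
  (wr_mul z x = wr_mul x (wr_mul m z) <->
   forall j, coef (fst m) j = coef (fst z) (j - snd x) - coef (fst z) j).
Proof.
  intros Hx Hz Hm. split.
  - intros E j. pose proof (G_eq_coef _ _ E (j - snd x)) as C.
    rewrite !mul_coef in C. rewrite ?Hx, ?Hz, ?Hm in C.
    replace (j - snd x + snd x) with j in C by lia.
    replace (j + 0) with j in C by lia. lia.
  - intros H. apply G_ext.
    + intros j. rewrite !mul_coef. rewrite ?Hx, ?Hz, ?Hm, ?H.
      replace (j + snd x - snd x) with j by lia. replace (j + 0) with j by lia.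
      replace (j + snd x + 0) with (j + snd x) by lia. lia.
    + rewrite !mul_snd. lia.
Qed.

Definition IsHF (pb u : nat) : formula group_sym :=
  FEq (gm (gv u) (gv pb)) (gm (gv pb) (gv u)).
Definition InAF (pa x : nat) : formula group_sym :=
  FEq (gm (gv x) (gv pa)) (gm (gv pa) (gv x)).
Definition LinF (x z m : nat) : formula group_sym :=
  FEq (gm (gv z) (gv x)) (gm (gv x) (gm (gv m) (gv z))).

Definition Good (pa pb : nat) (w : nat -> G) : Prop := w pa = wr_a /\ w pb = wr_b.

Lemma IsHF_sat pa pb w u : Good pa pb w -> (sat ZwrZ w (IsHF pb u) <-> snd (w u) = 0).
Proof. intros [_ Hb]. simpl. rewrite Hb. apply isH_iff. Qed.

Lemma InAF_sat pa pb w x : Good pa pb w -> (sat ZwrZ w (InAF pa x) <-> forall j, coef (fst (w x)) j = 0).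
Proof. intros [Ha _]. simpl. rewrite Ha. apply inA_iff. Qed.

Lemma Good_upd pa pb w n g : Good pa pb w -> n <> pa -> n <> pb -> Good pa pb (upd w n g).
Proof.
  intros [Ha Hb] H1 H2. unfold Good, upd.
  rewrite (proj2 (Nat.eqb_neq pa n)) by lia. rewrite (proj2 (Nat.eqb_neq pb n)) by lia. auto.
Qed.

Lemma comm_iff (g x : G) : (forall j, coef (fst x) j = 0) ->
  (wr_mul g (wr_mul wr_b x) = wr_mul (wr_mul wr_b x) g <->
   forall j, coef (fst g) j + delta0 (j + snd g) = delta0 j + coef (fst g) (j + snd x)).
Proof.
  intros Hx. split.
  - intros E j. pose proof (G_eq_coef _ _ E j) as C. gsin C. rewrite ?Hx in C.
    unfold delta0. replace (j + 0) with j in C by lia. lia.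
  - intros H. apply G_ext.
    + intros j. gs. rewrite ?Hx. specialize (H j). unfold delta0 in H.
      replace (j+0) with j by lia. lia.
    + gs. lia.
Qed.

Lemma delta0_mult (N i : Z) : N <> 0 -> delta0 (i * N) = if Z.eqb i 0 then 1 else 0.
Proof.
  intros HN. unfold delta0. destruct (Z.eqb_spec i 0); destruct (Z.eqb_spec (i*N) 0); nia.
Qed.

Lemma div_sound (h : Z -> Z) (Hs : fin_supp h) (N p : Z) :
  (forall j, h j + delta0 (j + p) = delta0 j + h (j + N)) -> (N | p).
Proof.
  intros E. destruct (Z.eq_dec N 0) as [HN|HN].
  - subst. specialize (E 0). rewrite Z.add_0_l, Z.add_0_r in E. unfold delta0 in E.
    destruct (Z.eqb_spec p 0); [subst; apply Z.divide_refl|]. change (Z.eqb 0 0) with true in E. cbv iota in E. lia.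
  - destruct (Zdivide_dec N p) as [D|ND]; auto. exfalso.
    apply (class0_contra h Hs N HN). intros i. specialize (E (i*N)).
    rewrite delta0_mult in E by auto.
    assert (delta0 (i*N + p) = 0).
    { unfold delta0. destruct (Z.eqb_spec (i*N+p) 0); auto. exfalso. apply ND. exists (-i). lia. }
    replace ((i+1)*N) with (i*N + N) by lia. destruct (Z.eqb i 0); lia.
Qed.

Definition phi (c i : Z) : Z :=
  (if andb (0 <=? i) (i <? c) then 1 else 0) - (if andb (c <=? i) (i <? 0) then 1 else 0).
Definition psi (c i : Z) : Z :=
  (if andb (1 <=? i) (i <=? c) then i - c else 0) - (if andb (c <? i) (i <=? 0) then i - c else 0).

Ltac zbools := repeat match goal with
  | |- context [Z.leb ?a ?b] => destruct (Z.leb_spec a b)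
  | |- context [Z.ltb ?a ?b] => destruct (Z.ltb_spec a b)
  | |- context [Z.eqb ?a ?b] => destruct (Z.eqb_spec a b)
  end; cbn [andb].

Lemma phi_step c i : phi c i - phi c (i - 1) =
  (if Z.eqb i 0 then 1 else 0) - (if Z.eqb i c then 1 else 0).
Proof. unfold phi. zbools; lia. Qed.

Lemma psi_step c i : psi c (i + 1) - psi c i = phi c i - c * (if Z.eqb i 0 then 1 else 0).
Proof. unfold psi, phi. zbools; lia. Qed.

Lemma phi_nz c i : phi c i <> 0 -> Z.abs i <= Z.abs c.
Proof. unfold phi. zbools; lia. Qed.
Lemma psi_nz c i : psi c i <> 0 -> Z.abs i <= Z.abs c.
Proof. unfold psi. zbools; lia. Qed.

Definition onclass (N : Z) (f : Z -> Z) (j : Z) : Z :=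
  if Z.eqb (j mod N) 0 then f (- (j / N)) else 0.

Lemma onclass_supp N c f : N <> 0 -> (forall i, f i <> 0 -> Z.abs i <= Z.abs c) ->
  fin_supp (onclass N f).
Proof.
  intros HN Hf. exists (Z.abs N * (Z.abs c + 1)). intros k Hk. unfold onclass.
  destruct (Z.eqb_spec (k mod N) 0) as [E|E]; auto.
  destruct (Z.eq_dec (f (- (k / N))) 0) as [F|F]; auto. exfalso.
  apply Hf in F. pose proof (Z_div_mod_eq_full k N). rewrite E in H.
  assert (Z.abs k = Z.abs N * Z.abs (k / N)) by (rewrite H at 1; rewrite Z.add_0_r; apply Z.abs_mul).
  nia.
Qed.

Lemma onclass_mult N f q : N <> 0 -> onclass N f (q * N) = f (- q).
Proof.
  intros HN. unfold onclass. rewrite Z_mod_mult. simpl. rewrite Z_div_mult_full by auto. auto.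
Qed.

Lemma onclass_nonmult N f j : (j mod N <> 0) -> onclass N f j = 0.
Proof. intros H. unfold onclass. destruct (Z.eqb_spec (j mod N) 0); tauto. Qed.

Lemma mult_or_not N j : N <> 0 -> (exists q, j = q * N) \/ (j mod N <> 0 /\ forall q, j <> q * N).
Proof.
  intros HN. destruct (Z.eq_dec (j mod N) 0) as [E|E].
  - left. exists (j / N). pose proof (Z_div_mod_eq_full j N). lia.
  - right. split; auto. intros q ->. apply E. apply Z_mod_mult.
Qed.

Definition vcen (N c : Z) : Hgrp.
Proof. destruct (Z.eq_dec N 0) as [_|HN].
  - exact zeroH.
  - exact (MkH (onclass N (phi c)) (onclass_supp N c (phi c) HN (phi_nz c))).
Defined.

Definition zcen (N c : Z) : Hgrp.
Proof. destruct (Z.eq_dec N 0) as [_|HN].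
  - exact zeroH.
  - exact (MkH (onclass N (psi c)) (onclass_supp N c (psi c) HN (psi_nz c))).
Defined.

Lemma vcen_coef N c j : N <> 0 -> coef (vcen N c) j = onclass N (phi c) j.
Proof. intros HN. unfold vcen. destruct (Z.eq_dec N 0); [lia|reflexivity]. Qed.
Lemma zcen_coef N c j : N <> 0 -> coef (zcen N c) j = onclass N (psi c) j.
Proof. intros HN. unfold zcen. destruct (Z.eq_dec N 0); [lia|reflexivity]. Qed.

Lemma vcen_eq N c j : N <> 0 ->
  coef (vcen N c) j + delta0 (j + N * c) = delta0 j + coef (vcen N c) (j + N).
Proof.
  intros HN. rewrite !vcen_coef by auto.
  destruct (mult_or_not N j HN) as [[q ->]|[Hm Hq]].
  - replace (q*N + N) with ((q+1)*N) by lia. rewrite !onclass_mult by auto.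
    replace (q*N + N*c) with ((q + c) * N) by lia. rewrite !delta0_mult by auto.
    pose proof (phi_step c (-q)). replace (-q - 1) with (-(q+1)) in H by lia.
    destruct (Z.eqb_spec (-q) 0), (Z.eqb_spec (-q) c), (Z.eqb_spec q 0), (Z.eqb_spec (q+c) 0); lia.
  - rewrite onclass_nonmult by auto. rewrite onclass_nonmult.
    + unfold delta0. destruct (Z.eqb_spec j 0); [exfalso; apply (Hq 0); lia|].
      destruct (Z.eqb_spec (j + N*c) 0); [exfalso; apply (Hq (-c)); lia|]. lia.
    + replace (j + N) with (j + 1*N) by lia. rewrite Z_mod_plus_full. auto.
Qed.

Lemma zcen_eq N c j : N <> 0 ->
  coef (vcen N c) j - c * delta0 j = coef (zcen N c) (j - N) - coef (zcen N c) j.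
Proof.
  intros HN. rewrite !vcen_coef, !zcen_coef by auto.
  destruct (mult_or_not N j HN) as [[q ->]|[Hm Hq]].
  - replace (q*N - N) with ((q-1)*N) by lia. rewrite !onclass_mult by auto.
    rewrite delta0_mult by auto.
    pose proof (psi_step c (-q)). replace (-q + 1) with (-(q-1)) in H by lia.
    destruct (Z.eqb_spec (-q) 0), (Z.eqb_spec q 0); lia.
  - rewrite !onclass_nonmult; auto.
    + unfold delta0. destruct (Z.eqb_spec j 0); [exfalso; apply (Hq 0); lia|]. lia.
    + replace (j - N) with (j + (-1)*N) by lia. rewrite Z_mod_plus_full. auto.
Qed.

Definition ConstS (g : G) : Prop := snd g = 0 /\ forall j, j <> 0 -> coef (fst g) j = 0.

Lemma const_sound (u : G) : snd u = 0 ->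
  (forall x : G, (forall j, coef (fst x) j = 0) -> snd x <> 0 ->
     exists g y z m : G, (forall j, coef (fst y) j = 0) /\ snd z = 0 /\ snd m = 0 /\
       (forall j, coef (fst m) j = coef (fst z) (j - snd x) - coef (fst z) j) /\
       (forall j, coef (fst g) j + delta0 (j + snd g) = delta0 j + coef (fst g) (j + snd x)) /\
       g = wr_mul (wr_mul m u) y) -> ConstS u.
Proof.
  intros Hu H. split; auto.
  destruct (fs_bound _ (coef_supp (fst u))) as [B [HB0 HB]].
  set (N := 2*B+1).
  destruct (H (zeroH, N)) as [g [y [z [m [Hy [Hz [Hm [Hl [Hc Hg]]]]]]]]]; [reflexivity| simpl; lia|].
  simpl snd in Hl, Hc.
  set (v := coef (fst g)) in *.
  assert (Hv : forall j, v j = coef (fst m) j + coef (fst u) j).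
  { intros j. unfold v. rewrite Hg. gs. rewrite Hm, Hy. rewrite ?Z.add_0_r. reflexivity. }
  assert (Hvs : fin_supp v) by apply coef_supp.
  set (k := snd g) in Hc.
  intros r Hr0. destruct (Z_lt_le_dec B (Z.abs r)) as [Hr|Hr]; [apply HB; auto|].
  assert (Hnot : forall i, r <> i * N).
  { intros i E. destruct (Z.eq_dec i 0); subst N; nia. }
  assert (S1 : forall i, r + i * N + k <> 0).
  { intros i0 E. apply (class0_contra v Hvs N); [lia|]. intros i.
    specialize (Hc (i*N)). rewrite delta0_mult in Hc by lia.
    assert (delta0 (i*N + k) = 0).
    { unfold delta0. destruct (Z.eqb_spec (i*N+k) 0); auto. exfalso. apply (Hnot (i - i0)). nia. }
    replace ((i+1)*N) with (i*N+N) by lia. destruct (Z.eqb i 0); lia. }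
  assert (S2 : forall i, v (r + i*N) = 0).
  { intros i. apply (halfline v Hvs N); [lia|]. intros i' Hi'.
    specialize (Hc (r + i*N + i'*N)).
    assert (delta0 (r + i*N + i'*N + k) = 0).
    { unfold delta0. destruct (Z.eqb_spec (r + i*N + i'*N + k) 0); auto. exfalso.
      apply (S1 (i + i')). nia. }
    assert (delta0 (r + i*N + i'*N) = 0).
    { unfold delta0. destruct (Z.eqb_spec (r + i*N + i'*N) 0); auto. exfalso.
      apply (Hnot (-(i+i'))). nia. }
    replace (r + i * N + (i' + 1) * N) with (r + i*N + i'*N + N) by lia. lia. }
  assert (S3 : forall i, i <> 0 -> coef (fst z) (r + i*N - N) = coef (fst z) (r + i*N)).
  { intros i Hi. assert (coef (fst u) (r + i*N) = 0) by (apply HB; subst N; nia).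
    specialize (Hv (r + i*N)). rewrite S2 in Hv. specialize (Hl (r + i*N)). lia. }
  assert (Z1 : coef (fst z) r = 0).
  { apply (halfline _ (coef_supp (fst z)) N); [lia|]. intros i Hi.
    specialize (S3 (i+1) ltac:(lia)). replace (r + (i+1)*N - N) with (r + i*N) in S3 by lia. auto. }
  assert (Z2 : coef (fst z) (r - N) = 0).
  { apply (halfline_back _ (coef_supp (fst z)) N); [lia|]. intros i Hi.
    specialize (S3 (-(i+1)) ltac:(lia)).
    replace (r + -(i+1)*N - N) with (r - N - (i+1)*N) in S3 by lia.
    replace (r + -(i+1)*N) with (r - N - i*N) in S3 by lia. auto. }
  specialize (Hv r). specialize (S2 0). replace (r + 0*N) with r in S2 by lia.
  specialize (Hl r). lia.
Qed.

Lemma doubling (f : Z -> Z) (Hs : fin_supp f) (j0 : Z) :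
  (forall t, 0 <= t -> f (j0 - t - 1) = 2 * f (j0 - t)) -> f j0 = 0.
Proof.
  intros H. destruct (fs_bound f Hs) as [B [HB0 HB]].
  assert (E : forall t, 0 <= t -> f (j0 - t) = 2^t * f j0).
  { intros t Ht. pattern t; apply natlike_ind; [ | | exact Ht].
    - rewrite Z.sub_0_r, Z.pow_0_r. lia.
    - intros x Hx IH. replace (j0 - Z.succ x) with (j0 - x - 1) by lia. rewrite H, IH by auto.
      rewrite Z.pow_succ_r by auto. lia. }
  pose proof (E (B + Z.abs j0 + 1) ltac:(lia)) as E1. rewrite HB in E1 by lia.
  assert (0 < 2 ^ (B + Z.abs j0 + 1)) by (apply Z.pow_pos_nonneg; lia). nia.
Qed.

Lemma pos_sound (u z m : G) (n : Z) : ConstS u ->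
  (forall j, coef (fst m) j + 2 * coef (fst z) j = coef (fst z) (j - 1)) ->
  (forall i, coef (fst u) i + coef (fst m) i = delta0 (i - n)) -> 0 <= n.
Proof.
  intros [_ Hu] Htw Hmo. destruct (Z_lt_le_dec n 0) as [Hn|Hn]; auto. exfalso.
  assert (Hm : forall i, i <= n -> coef (fst m) i = if Z.eqb i n then 1 else 0).
  { intros i Hi. specialize (Hmo i). rewrite Hu in Hmo by lia. unfold delta0 in Hmo.
    destruct (Z.eqb_spec (i - n) 0), (Z.eqb_spec i n); lia. }
  assert (Z0 : coef (fst z) (n - 1) = 0).
  { apply (doubling _ (coef_supp (fst z))). intros t Ht.
    specialize (Htw (n - 1 - t)). rewrite Hm in Htw by lia.
    destruct (Z.eqb_spec (n - 1 - t) n); [lia|]. lia. }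
  specialize (Htw n). rewrite Hm in Htw by lia. rewrite Z.eqb_refl in Htw. lia.
Qed.

Lemma fs_single (c j0 : Z) : fin_supp (fun j => c * delta0 (j - j0)).
Proof. exists (Z.abs j0). intros k Hk. unfold delta0. destruct (Z.eqb_spec (k - j0) 0); lia. Qed.

Definition constH (c : Z) : Hgrp := MkH (fun j => c * delta0 (j - 0)) (fs_single c 0).

Lemma fs_geo (n : Z) : fin_supp (fun j => if andb (0 <=? j) (j <=? n - 1) then 2 ^ (n - 1 - j) else 0).
Proof. exists (Z.abs n). intros k Hk. destruct (Z.leb_spec 0 k), (Z.leb_spec k (n-1)); simpl; auto; lia. Qed.

Definition geoH (n : Z) : Hgrp := MkH _ (fs_geo n).

Lemma fs_mon (n : Z) : fin_supp (fun j => 1 * delta0 (j - n) - 2 ^ n * delta0 (j - 0)).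
Proof.
  destruct (fs_single 1 n) as [B1 H1]. destruct (fs_single (2^n) 0) as [B2 H2].
  exists (Z.abs B1 + Z.abs B2). intros k Hk. rewrite H1, H2 by lia. lia.
Qed.

Definition monH (n : Z) : Hgrp := MkH _ (fs_mon n).

Lemma pos_complete (n : Z) : 0 <= n ->
  (forall j, coef (monH n) j + 2 * coef (geoH n) j = coef (geoH n) (j - 1)) /\
  (forall i, coef (constH (2^n)) i + coef (monH n) i = delta0 (i - n)).
Proof.
  intros Hn. split.
  - intros j. unfold monH, geoH, delta0; cbn [coef].
    rewrite !Z.sub_0_r.
    destruct (Z.eqb_spec (j - n) 0), (Z.eqb_spec j 0);
    destruct (Z.leb_spec 0 j), (Z.leb_spec j (n-1)), (Z.leb_spec 0 (j-1)), (Z.leb_spec (j-1) (n-1)); cbn [andb];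
    try lia.
    + assert (n = 0) by lia. subst. rewrite Z.pow_0_r. lia.
    + replace (n - 1 - (j - 1)) with 0 by lia. rewrite Z.pow_0_r. lia.
    + subst j. replace (n - 1 - 0) with (n-1) by lia.
      replace n with (Z.succ (n-1)) at 1 by lia. rewrite Z.pow_succ_r by lia. lia.
    + replace (n - 1 - (j - 1)) with (Z.succ (n - 1 - j)) by lia. rewrite Z.pow_succ_r by lia. lia.
  - intros i. unfold monH, constH, delta0; cbn [coef]. lia.
Qed.
Arguments wr_mul : simpl never.

Definition ConstF (pa pb u c : nat) : formula group_sym :=
  let comm := FEq (gm (gv (c+1)) (gm (gv pb) (gv c))) (gm (gm (gv pb) (gv c)) (gv (c+1))) in
  let eqg := FEq (gv (c+1)) (gm (gm (gv (c+4)) (gv u)) (gv (c+2))) in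
  let body := FAnd (InAF pa (c+2)) (FAnd (IsHF pb (c+3)) (FAnd (IsHF pb (c+4))
               (FAnd (LinF c (c+3) (c+4)) (FAnd comm eqg)))) in
  FAnd (IsHF pb u)
   (FAll c (FImp (InAF pa c) (FImp (FNot (FEq (gm (gv c) (gv c)) (gv c)))
     (FEx (c+1) (FEx (c+2) (FEx (c+3) (FEx (c+4) body))))))).

Lemma xx_iff (x : G) : (forall j, coef (fst x) j = 0) -> (wr_mul x x = x <-> snd x = 0).
Proof.
  intros Hx. split.
  - intros E. apply G_eq_snd in E. rewrite mul_snd in E. lia.
  - intros E. apply G_ext; [intros j|]; gs; rewrite ?Hx; lia.
Qed.

Lemma fs_lin (h : Z -> Z) (N : Z) : fin_supp h -> fin_supp (fun j => h (j - N) - h j).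
Proof.
  intros Hs. destruct (fs_bound h Hs) as [B [HB0 HB]]. exists (B + Z.abs N).
  intros k Hk. rewrite !HB by lia. lia.
Qed.

Definition linH (h : Hgrp) (N : Z) : Hgrp := MkH _ (fs_lin (coef h) N (coef_supp h)).

Lemma ConstF_sat (pa pb u c : nat) (w : nat -> G) : Good pa pb w -> (pa < c)%nat -> (pb < c)%nat -> (u < c)%nat ->
  (sat ZwrZ w (ConstF pa pb u c) <-> ConstS (w u)).
Proof.
  intros [Ha Hb] H1 H2 H3. unfold ConstF, IsHF, InAF, LinF, gm, gv. cbn -[ConstF wr_mul]. unfold upd.
  eqb_solve. rewrite Ha, Hb. split.
  - intros [Hu H]. apply isH_iff in Hu. apply const_sound; auto.
    intros x Hx Hx1. destruct (H x) as [g [y [z [m [Hy [Hz [Hm [Hl [Hc Hg]]]]]]]]].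
    + apply inA_iff; auto.
    + rewrite xx_iff; auto.
    + exists g, y, z, m. rewrite inA_iff in Hy. rewrite isH_iff in Hz. rewrite isH_iff in Hm.
      rewrite lin_iff in Hl by auto. rewrite comm_iff in Hc by auto. tauto.
  - intros [Hs Hc]. split; [apply isH_iff; auto|]. intros x Hx Hno.
    rewrite inA_iff in Hx. rewrite xx_iff in Hno by auto.
    set (N := snd x) in *. set (c0 := coef (fst (w u)) 0).
    exists (vcen N c0, N * c0), (zeroH, N * c0), (zcen N c0, 0), (linH (zcen N c0) N, 0).
    split; [apply inA_iff; reflexivity|].
    split; [apply isH_iff; reflexivity|].
    split; [apply isH_iff; reflexivity|].
    split; [rewrite lin_iff; [intros j; reflexivity|auto|reflexivity|reflexivity]|].
    split.
    + rewrite comm_iff by auto. intros j. cbn [fst snd]. fold N. apply vcen_eq. auto.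
    + apply G_ext.
      * intros j. gs. unfold linH. cbn [coef]. idtac. 
        pose proof (zcen_eq N c0 j Hno) as E. unfold delta0 in E |- *.
        destruct (Z.eqb_spec j 0).
        -- subst j. fold c0. lia.
        -- rewrite Hc by auto. lia.
      * gs. rewrite Hs. lia.
Qed.

Arguments ConstF : simpl never.

Lemma two_iff (z m : G) : snd z = 0 -> snd m = 0 ->
  (wr_mul z wr_a = wr_mul wr_a (wr_mul m (wr_mul z z)) <->
   forall j, coef (fst m) j + 2 * coef (fst z) j = coef (fst z) (j - 1)).
Proof.
  intros Hz Hm. split.
  - intros E j. pose proof (G_eq_coef _ _ E (j - 1)) as C. gsin C. rewrite Hm, Hz in C.
    replace (j - 1 + 1) with j in C by lia. rewrite ?Z.add_0_r in C. lia.
  - intros H. apply G_ext; [intros j|]; gs; rewrite ?Hm, ?Hz; rewrite ?Z.add_0_r.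
    + specialize (H (j+1)). replace (j + 1 - 1) with j in H by lia. lia.
    + lia.
Qed.

Lemma mon_iff (x u m : G) : (forall j, coef (fst x) j = 0) -> snd u = 0 -> snd m = 0 ->
  (wr_mul wr_b x = wr_mul x (wr_mul u m) <->
   forall i, coef (fst u) i + coef (fst m) i = delta0 (i - snd x)).
Proof.
  intros Hx Hu Hm. split.
  - intros E i. pose proof (G_eq_coef _ _ E (i - snd x)) as C. gsin C. rewrite ?Hx, ?Hu in C.
    replace (i - snd x + snd x) with i in C by lia. rewrite ?Z.add_0_r in C. unfold delta0. lia.
  - intros H. apply G_ext; [intros j|]; gs; rewrite ?Hx, ?Hu, ?Hm; rewrite ?Z.add_0_r.
    + specialize (H (j + snd x)). replace (j + snd x - snd x) with j in H by lia. unfold delta0 in H. lia.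
    + lia.
Qed.

Definition DomF (pa pb x c : nat) : formula group_sym :=
  let two := FEq (gm (gv (c+1)) (gv pa)) (gm (gv pa) (gm (gv (c+2)) (gm (gv (c+1)) (gv (c+1))))) in
  let mon := FEq (gm (gv pb) (gv x)) (gm (gv x) (gm (gv c) (gv (c+2)))) in
  FAnd (InAF pa x) (FEx c (FEx (c+1) (FEx (c+2)
    (FAnd (ConstF pa pb c (c+3)) (FAnd (IsHF pb (c+1)) (FAnd (IsHF pb (c+2)) (FAnd two mon))))))).

Ltac good_tac Ha Hb := unfold Good; cbv beta; eqb_solve; split; assumption.

Lemma DomF_sat (pa pb x c : nat) (w : nat -> G) : Good pa pb w -> (pa < c)%nat -> (pb < c)%nat -> (x < c)%nat ->
  (sat ZwrZ w (DomF pa pb x c) <-> DomS (w x)).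
Proof.
  intros [Ha Hb] H1 H2 H3. unfold DomF, IsHF, InAF, gm, gv. cbn -[ConstF wr_mul]. unfold upd.
  eqb_solve. rewrite Ha, Hb. split.
  - intros [Hx [U [Zz [M [Hc [Hz [Hm [Ht Hmo]]]]]]]].
    rewrite ConstF_sat in Hc by (try lia; good_tac Ha Hb). cbv beta in Hc. eqb_solve_in Hc.
    rewrite inA_iff in Hx. rewrite isH_iff in Hz, Hm.
    rewrite two_iff in Ht by auto. rewrite mon_iff in Hmo by (auto; apply Hc).
    split; auto. eapply pos_sound; eauto.
  - intros [Hx Hn]. split; [apply inA_iff; auto|].
    exists (constH (2 ^ snd (w x)), 0), (geoH (snd (w x)), 0), (monH (snd (w x)), 0).
    destruct (pos_complete _ Hn) as [P1 P2].
    split.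
    { rewrite ConstF_sat by (try lia; good_tac Ha Hb). cbv beta. eqb_solve.
      split; [reflexivity|]. intros j Hj. unfold constH; cbn [fst coef]. unfold delta0.
      rewrite Z.sub_0_r. destruct (Z.eqb_spec j 0); lia. }
    split; [apply isH_iff; reflexivity|].
    split; [apply isH_iff; reflexivity|].
    split; [rewrite two_iff by reflexivity; exact P1|].
    rewrite mon_iff by (auto; reflexivity). exact P2.
Qed.

Arguments DomF : simpl never.

Definition DivF (pa pb x y c : nat) : formula group_sym :=
  FEx c (FAnd (IsHF pb c)
    (FEq (gm (gm (gv c) (gv y)) (gm (gv pb) (gv x))) (gm (gm (gv pb) (gv x)) (gm (gv c) (gv y))))).

Lemma DivF_sat (pa pb x y c : nat) (w : nat -> G) : Good pa pb w -> (pa < c)%nat -> (pb < c)%nat ->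
  (x < c)%nat -> (y < c)%nat ->
  (forall j, coef (fst (w x)) j = 0) -> (forall j, coef (fst (w y)) j = 0) ->
  (sat ZwrZ w (DivF pa pb x y c) <-> (snd (w x) | snd (w y))).
Proof.
  intros [Ha Hb] H1 H2 H3 H4 Hx Hy. unfold DivF, IsHF, gm, gv. cbn -[ConstF wr_mul]. unfold upd.
  eqb_solve. rewrite Hb. split.
  - intros [v [Hv E]]. rewrite isH_iff in Hv. rewrite comm_iff in E by auto.
    apply (div_sound (coef (fst v)) (coef_supp _) (snd (w x)) (snd (w y))).
    intros j. specialize (E j). gsin E. rewrite ?Hy, ?Hv in E. rewrite ?Z.add_0_r, ?Z.add_0_l in E.
    lia.
  - intros [q Hq]. destruct (Z.eq_dec (snd (w x)) 0) as [E|E].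
    + exists (zeroH, 0). split; [apply isH_iff; reflexivity|]. rewrite comm_iff by auto.
      intros j. gs. rewrite ?Hy. rewrite E in Hq. rewrite Hq. replace (j + q * 0) with j by lia.
      rewrite ?Z.add_0_r. lia.
    + exists (vcen (snd (w x)) q, 0). split; [apply isH_iff; reflexivity|]. rewrite comm_iff by auto.
      intros j. gs. rewrite ?Hy. rewrite ?Z.add_0_r. pose proof (vcen_eq (snd (w x)) q j E).
      rewrite Hq. replace (q * snd (w x)) with (snd (w x) * q) by lia. lia.
Qed.

Arguments DivF : simpl never.
Arguments wr_mul : simpl never.

Lemma gcd_succ_coprime (X : Z) : rel_prime (X + 1) X.
Proof. apply bezout_rel_prime. apply (Bezout_intro _ _ _ 1 (-1)). lia. Qed.

Lemma prod_div (X W : Z) : (X | W) -> (X + 1 | W) -> (X * (X + 1) | W).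
Proof.
  intros [k Hk] H2. subst W. assert (X + 1 | k).
  { apply (Gauss _ X). - rewrite Z.mul_comm. auto. - apply gcd_succ_coprime. }
  destruct H as [k' ->]. exists k'. ring.
Qed.

Lemma lcm_char (X L : Z) : 0 <= X -> 0 <= L ->
  ((X | L) /\ (X + 1 | L) /\ (forall W, 0 <= W -> (X | W) -> (X + 1 | W) -> (L | W)))
  <-> L = X * (X + 1).
Proof.
  intros HX HL. split.
  - intros [H1 [H2 H3]]. apply Z.divide_antisym_nonneg; auto; [nia| |].
    + apply H3; [nia| exists (X+1); ring | exists X; ring].
    + apply prod_div; auto.
  - intros ->. split; [exists (X+1); ring|]. split; [exists X; ring|].
    intros W _ H1 H2. apply prod_div; auto.
Qed.

Definition zpow (n : Z) : G := (zeroH, n).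

Lemma DomS_zpow n : 0 <= n -> DomS (zpow n).
Proof. intros. split; simpl; auto. Qed.

Lemma DomS_is_zpow g : DomS g -> g = zpow (snd g).
Proof. intros [H1 H2]. apply G_ext; simpl; auto. Qed.

Lemma zpow_mul m n : wr_mul (zpow m) (zpow n) = zpow (m + n).
Proof. unfold zpow. apply G_ext; [intros j|]; gs; lia. Qed.

Lemma DomS_eq g h : DomS g -> DomS h -> (g = h <-> snd g = snd h).
Proof.
  intros Hg Hh. split; [intros ->; auto|]. intros E.
  rewrite (DomS_is_zpow g Hg), (DomS_is_zpow h Hh), E. auto.
Qed.

Ltac side Ha Hb := first [ lia | (unfold Good, upd; cbv beta; eqb_solve; split; assumption)
  | (unfold upd; cbv beta; eqb_solve; reflexivity) | (unfold upd; cbv beta; eqb_solve; assumption)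
  | (unfold upd; cbv beta; eqb_solve; solve [auto | apply DomS_zpow; lia]) ].

Definition LcmF (pa pb x y l c : nat) : formula group_sym :=
  FAnd (DivF pa pb x l c) (FAnd (DivF pa pb y l c)
   (FAll c (FImp (DomF pa pb c (c+1)) (FImp (DivF pa pb x c (c+1))
      (FImp (DivF pa pb y c (c+1)) (DivF pa pb l c (c+1))))))).

Lemma DivF_val pa pb x y c w X Y : Good pa pb w -> (pa < c)%nat -> (pb < c)%nat ->
  (x < c)%nat -> (y < c)%nat -> w x = X -> w y = Y -> DomS X -> DomS Y ->
  (sat ZwrZ w (DivF pa pb x y c) <-> (snd X | snd Y)).
Proof.
  intros Hg H1 H2 H3 H4 E1 E2 D1 D2. subst. apply DivF_sat; auto.
  apply D1. apply D2.
Qed.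

Lemma DomF_val pa pb x c w X : Good pa pb w -> (pa < c)%nat -> (pb < c)%nat ->
  (x < c)%nat -> w x = X -> (sat ZwrZ w (DomF pa pb x c) <-> DomS X).
Proof. intros. subst. apply DomF_sat; auto. Qed.

Lemma LcmF_sat pa pb x y l c w X Y L : Good pa pb w -> (pa < c)%nat -> (pb < c)%nat ->
  (x < c)%nat -> (y < c)%nat -> (l < c)%nat -> w x = X -> w y = Y -> w l = L ->
  DomS X -> DomS Y -> DomS L ->
  (sat ZwrZ w (LcmF pa pb x y l c) <->
   ((snd X | snd L) /\ (snd Y | snd L) /\
    (forall W, 0 <= W -> (snd X | W) -> (snd Y | W) -> (snd L | W)))).
Proof.
  intros [Ha Hb] H1 H2 H3 H4 H5 E1 E2 E3 D1 D2 D3. pose proof (conj Ha Hb) as Hg.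
  unfold LcmF. cbn -[wr_mul DivF DomF].
  rewrite (DivF_val pa pb x l c w X L) by auto.
  rewrite (DivF_val pa pb y l c w Y L) by auto.
  split; intros [A [B C]]; (split; [auto|split; [auto|]]).
  - intros W HW D4 D5. specialize (C (zpow W)).
    rewrite (DomF_val pa pb c (c+1) _ (zpow W)) in C by side Ha Hb.
    rewrite (DivF_val pa pb x c (c+1) _ X (zpow W)) in C by side Ha Hb.
    rewrite (DivF_val pa pb y c (c+1) _ Y (zpow W)) in C by side Ha Hb.
    rewrite (DivF_val pa pb l c (c+1) _ L (zpow W)) in C by side Ha Hb.
    apply C; auto. apply DomS_zpow; auto.
  - intros g D4 D5 D6. rewrite (DomF_val pa pb c (c+1) _ g) in D4 by side Ha Hb.
    rewrite (DivF_val pa pb x c (c+1) _ X g) in D5 by side Ha Hb.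
    rewrite (DivF_val pa pb y c (c+1) _ Y g) in D6 by side Ha Hb.
    rewrite (DivF_val pa pb l c (c+1) _ L g) by side Ha Hb.
    apply C; auto. apply D4.
Qed.

Arguments LcmF : simpl never.

Lemma a_zpow : wr_a = zpow 1.
Proof. apply G_ext; reflexivity. Qed.

Definition SqF (pa pb x s c : nat) : formula group_sym :=
  FEx c (FEx (c+1) (FAnd (DomF pa pb c (c+2)) (FAnd (FEq (gv (c+1)) (gm (gv x) (gv pa)))
    (FAnd (LcmF pa pb x (c+1) c (c+2)) (FEq (gv c) (gm (gv s) (gv x))))))).

Lemma SqF_sat pa pb x s c w X S : Good pa pb w -> (pa < c)%nat -> (pb < c)%nat ->
  (x < c)%nat -> (s < c)%nat -> w x = X -> w s = S -> DomS X -> DomS S ->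
  (sat ZwrZ w (SqF pa pb x s c) <-> snd S = snd X * snd X).
Proof.
  intros [Ha Hb] H1 H2 H3 H4 E1 E2 D1 D2.
  unfold SqF, gm, gv. cbn -[wr_mul DivF DomF LcmF]. unfold upd. eqb_solve.
  rewrite Ha, E1, E2. rewrite (DomS_is_zpow X D1), (DomS_is_zpow S D2) in *.
  destruct D1 as [_ D1]. destruct D2 as [_ D2]. cbn [snd zpow] in *.
  rewrite a_zpow, !zpow_mul. split.
  - intros [l [x1 [Dl [Ex1 [Lc El]]]]].
    rewrite (DomF_val pa pb c (c+2) _ l) in Dl by side Ha Hb.
    subst x1 l.
    rewrite (LcmF_sat pa pb x (c+1) c (c+2) _ (zpow (snd X)) (zpow (snd X + 1)) (zpow (snd S + snd X)))
      in Lc by (first [side Ha Hb | apply DomS_zpow; lia]).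
    cbn [snd zpow] in Lc. rewrite lcm_char in Lc by lia. nia.
  - intros E. exists (zpow (snd X * (snd X + 1))), (zpow (snd X + 1)).
    split; [rewrite (DomF_val pa pb c (c+2) _ (zpow (snd X * (snd X + 1)))) by side Ha Hb;
            apply DomS_zpow; nia|].
    split; [reflexivity|].
    split.
    + rewrite (LcmF_sat pa pb x (c+1) c (c+2) _ (zpow (snd X)) (zpow (snd X + 1)) (zpow (snd X * (snd X + 1))))
        by (first [side Ha Hb | apply DomS_zpow; nia]).
      cbn [snd zpow]. apply lcm_char; nia.
    + f_equal. lia.
Qed.

Arguments SqF : simpl never.

Definition MulF (pa pb x y z c : nat) : formula group_sym :=
  let last := FEq (gv (c+2)) (gm (gm (gm (gv z) (gv z)) (gv c)) (gv (c+1))) in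
  let sq := FAnd (SqF pa pb x c (c+4)) (FAnd (SqF pa pb y (c+1) (c+4))
              (FAnd (SqF pa pb (c+3) (c+2) (c+4)) last)) in
  let body := FAnd (DomF pa pb c (c+4)) (FAnd (DomF pa pb (c+1) (c+4)) (FAnd (DomF pa pb (c+2) (c+4))
                (FAnd (FEq (gv (c+3)) (gm (gv x) (gv y))) sq))) in
  FAnd (DomF pa pb z c) (FEx c (FEx (c+1) (FEx (c+2) (FEx (c+3) body)))).

Lemma MulF_sat pa pb x y z c w X Y : Good pa pb w -> (pa < c)%nat -> (pb < c)%nat ->
  (x < c)%nat -> (y < c)%nat -> (z < c)%nat -> w x = X -> w y = Y -> DomS X -> DomS Y ->
  (sat ZwrZ w (MulF pa pb x y z c) <-> DomS (w z) /\ snd (w z) = snd X * snd Y).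
Proof.
  intros [Ha Hb] H1 H2 H3 H4 H5 E1 E2 D1 D2.
  unfold MulF, gm, gv. cbn -[wr_mul DivF DomF LcmF SqF]. unfold upd. eqb_solve.
  rewrite (DomF_val pa pb z c w (w z)) by side Ha Hb.
  rewrite E1, E2. rewrite (DomS_is_zpow X D1), (DomS_is_zpow Y D2) in *.
  destruct D1 as [_ D1]. destruct D2 as [_ D2]. cbn [snd zpow] in *. rewrite zpow_mul.
  split.
  - intros [Dz [s1 [s2 [s3 [xy [Ds1 [Ds2 [Ds3 [Exy [Q1 [Q2 [Q3 El]]]]]]]]]]]].
    split; auto.
    rewrite (DomF_val pa pb c (c+4) _ s1) in Ds1 by side Ha Hb.
    rewrite (DomF_val pa pb (c+1) (c+4) _ s2) in Ds2 by side Ha Hb.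
    rewrite (DomF_val pa pb (c+2) (c+4) _ s3) in Ds3 by side Ha Hb.
    subst xy.
    rewrite (SqF_sat pa pb x c (c+4) _ (zpow (snd X)) s1) in Q1 by (first [side Ha Hb | apply DomS_zpow; lia]).
    rewrite (SqF_sat pa pb y (c+1) (c+4) _ (zpow (snd Y)) s2) in Q2 by (first [side Ha Hb | apply DomS_zpow; lia]).
    rewrite (SqF_sat pa pb (c+3) (c+2) (c+4) _ (zpow (snd X + snd Y)) s3) in Q3 by (first [side Ha Hb | apply DomS_zpow; lia]).
    cbn [snd zpow] in Q1, Q2, Q3.
    rewrite (DomS_is_zpow _ Dz), (DomS_is_zpow _ Ds1), (DomS_is_zpow _ Ds2), !zpow_mul in El.
    apply G_eq_snd in El. cbn [snd zpow] in El. nia.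
  - intros [Dz Ez]. split; auto.
    exists (zpow (snd X * snd X)), (zpow (snd Y * snd Y)), (zpow ((snd X + snd Y) * (snd X + snd Y))),
      (zpow (snd X + snd Y)).
    split; [rewrite (DomF_val pa pb c (c+4) _ (zpow (snd X * snd X))) by side Ha Hb; apply DomS_zpow; nia|].
    split; [rewrite (DomF_val pa pb (c+1) (c+4) _ (zpow (snd Y * snd Y))) by side Ha Hb; apply DomS_zpow; nia|].
    split; [rewrite (DomF_val pa pb (c+2) (c+4) _ (zpow ((snd X + snd Y) * (snd X + snd Y)))) by side Ha Hb; apply DomS_zpow; nia|].
    split; [reflexivity|].
    split; [rewrite (SqF_sat pa pb x c (c+4) _ (zpow (snd X)) (zpow (snd X * snd X))) by (first [side Ha Hb | apply DomS_zpow; nia]); reflexivity|].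
    split; [rewrite (SqF_sat pa pb y (c+1) (c+4) _ (zpow (snd Y)) (zpow (snd Y * snd Y))) by (first [side Ha Hb | apply DomS_zpow; nia]); reflexivity|].
    split; [rewrite (SqF_sat pa pb (c+3) (c+2) (c+4) _ (zpow (snd X + snd Y)) (zpow ((snd X + snd Y) * (snd X + snd Y)))) by (first [side Ha Hb | apply DomS_zpow; nia]); reflexivity|].
    rewrite (DomS_is_zpow _ Dz), !zpow_mul. f_equal. rewrite Ez. ring.
Qed.

Arguments MulF : simpl never.
Arguments wr_mul : simpl never.

Fixpoint tvars (t : term arith_sym) : list nat :=
  match t with
  | Var i => [i]
  | App _ t1 t2 => tvars t1 ++ tvars t2
  end.

Fixpoint fvars (p : formula arith_sym) : list nat :=
  match p with
  | FEq t1 t2 => tvars t1 ++ tvars t2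
  | FNot q => fvars q
  | FAnd q r | FOr q r | FImp q r => fvars q ++ fvars r
  | FEx n q | FAll n q => n :: fvars q
  end.

Definition Aval (off : nat) (w : nat -> G) (t : term arith_sym) : nat :=
  eval NatArith (fun i => Z.to_nat (snd (w (off + i)%nat))) t.

Lemma upd_other {A} (w : nat -> A) n g i : i <> n -> upd w n g i = w i.
Proof. intros H. unfold upd. destruct (Nat.eqb_spec i n); congruence. Qed.
Lemma upd_same {A} (w : nat -> A) n g : upd w n g n = g.
Proof. unfold upd. rewrite Nat.eqb_refl. auto. Qed.

Ltac updsimp := repeat first [ rewrite upd_same | rewrite upd_other by lia ].
Ltac updsimp_in H := repeat first [ rewrite upd_same in H | rewrite upd_other in H by lia ].

Lemma Aval_upd off w n g t : (forall i, In i (tvars t) -> (off + i)%nat <> n) ->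
  Aval off (upd w n g) t = Aval off w t.
Proof.
  unfold Aval. induction t as [i|s t1 IH1 t2 IH2]; intros H; simpl.
  - rewrite upd_other; auto. apply H. simpl; auto.
  - rewrite IH1, IH2; auto; intros i Hi; apply H; simpl; apply in_or_app; auto.
Qed.

Fixpoint Val (pa pb off : nat) (t : term arith_sym) (y f : nat) : formula group_sym :=
  match t with
  | Var i => FEq (gv y) (gv (off + i)%nat)
  | App APlus t1 t2 => FEx f (FEx (f+1) (FAnd (Val pa pb off t1 f (f+2))
       (FAnd (Val pa pb off t2 (f+1) (f+2)) (FEq (gv y) (gm (gv f) (gv (f+1)))))))
  | App ATimes t1 t2 => FEx f (FEx (f+1) (FAnd (Val pa pb off t1 f (f+2))
       (FAnd (Val pa pb off t2 (f+1) (f+2)) (MulF pa pb f (f+1) y (f+2)))))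
  end.

Lemma zpow_nat_inj (m n : nat) : zpow (Z.of_nat m) = zpow (Z.of_nat n) -> m = n.
Proof. intros E. apply G_eq_snd in E. cbn [snd zpow] in E. lia. Qed.

Lemma Val_sat pa pb off t : forall w y f, Good pa pb w -> (pa < f)%nat -> (pb < f)%nat -> (y < f)%nat ->
  (forall i, In i (tvars t) -> (off + i < f)%nat /\ DomS (w (off + i)%nat)) ->
  (sat ZwrZ w (Val pa pb off t y f) <-> w y = zpow (Z.of_nat (Aval off w t))).
Proof.
  induction t as [i|s t1 IH1 t2 IH2]; intros w y f Hg H1 H2 H3 Hv.
  - simpl. destruct (Hv i ltac:(simpl; auto)) as [_ D].
    unfold Aval; simpl. rewrite Z2Nat.id by apply D. rewrite <- (DomS_is_zpow _ D). tauto.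
  - assert (Hv1 : forall i, In i (tvars t1) -> (off + i < f)%nat /\ DomS (w (off + i)%nat))
      by (intros i Hi; apply Hv; simpl; apply in_or_app; auto).
    assert (Hv2 : forall i, In i (tvars t2) -> (off + i < f)%nat /\ DomS (w (off + i)%nat))
      by (intros i Hi; apply Hv; simpl; apply in_or_app; auto).
    assert (Hgood : forall g1 g2, Good pa pb (upd (upd w f g1) (f+1) g2))
      by (intros; apply Good_upd; [apply Good_upd| |]; auto; lia).
    assert (Hw' : forall g1 g2 t', (forall i, In i (tvars t') -> (off + i < f)%nat /\ DomS (w (off + i)%nat)) ->
       forall i, In i (tvars t') -> (off + i < f + 2)%nat /\ DomS (upd (upd w f g1) (f+1) g2 (off + i)%nat)).
    { intros g1 g2 t' Ht' i Hi. destruct (Ht' i Hi). split; [lia|].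
      rewrite !upd_other by lia. auto. }
    assert (HA : forall g1 g2 t', (forall i, In i (tvars t') -> (off + i < f)%nat /\ DomS (w (off + i)%nat)) ->
       Aval off (upd (upd w f g1) (f+1) g2) t' = Aval off w t').
    { intros g1 g2 t' Ht'. rewrite !Aval_upd; auto; intros i Hi; destruct (Ht' i Hi); lia. }
    destruct s; cbn -[wr_mul MulF Val].
    + split.
      * intros [g1 [g2 [V1 [V2 E]]]].
        rewrite IH1 in V1 by first [apply Hgood | apply Hw'; auto | lia]. rewrite IH2 in V2 by first [apply Hgood | apply Hw'; auto | lia].
        updsimp_in V1. updsimp_in V2.
        rewrite !HA in V1, V2 by auto.
        cbn [sat eval gv gm interp ZwrZ] in E. updsimp_in E.
        rewrite E, V1, V2, zpow_mul. unfold Aval; simpl. f_equal. lia.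
      * intros E. exists (zpow (Z.of_nat (Aval off w t1))), (zpow (Z.of_nat (Aval off w t2))). cbn [sat].
        rewrite IH1 by first [apply Hgood | apply Hw'; auto | lia]. rewrite IH2 by first [apply Hgood | apply Hw'; auto | lia].
        updsimp. rewrite !HA by auto.
        split; [auto|]. split; [auto|]. cbn [sat eval gv gm interp ZwrZ]. updsimp.
        rewrite E, zpow_mul. unfold Aval; simpl. f_equal. lia.
    + split.
      * intros [g1 [g2 [V1 [V2 M]]]].
        rewrite IH1 in V1 by first [apply Hgood | apply Hw'; auto | lia]. rewrite IH2 in V2 by first [apply Hgood | apply Hw'; auto | lia].
        updsimp_in V1. updsimp_in V2.
        rewrite !HA in V1, V2 by auto.
        rewrite (MulF_sat pa pb f (f+1) y (f+2) _ g1 g2) in M; auto; try lia;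
          try (rewrite upd_other by lia; apply upd_same); try apply upd_same;
          try (rewrite V1; apply DomS_zpow; lia); try (rewrite V2; apply DomS_zpow; lia).
        updsimp_in M. destruct M as [Dz Mz].
        rewrite (DomS_is_zpow _ Dz), Mz, V1, V2. unfold Aval; simpl. f_equal. lia.
      * intros E. exists (zpow (Z.of_nat (Aval off w t1))), (zpow (Z.of_nat (Aval off w t2))). cbn [sat].
        rewrite IH1 by first [apply Hgood | apply Hw'; auto | lia]. rewrite IH2 by first [apply Hgood | apply Hw'; auto | lia].
        updsimp. rewrite !HA by auto.
        split; [auto|]. split; [auto|].
        rewrite (MulF_sat pa pb f (f+1) y (f+2) _ (zpow (Z.of_nat (Aval off w t1))) (zpow (Z.of_nat (Aval off w t2))));
          auto; try lia;
          try (rewrite upd_other by lia; apply upd_same); try apply upd_same;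
          try (apply DomS_zpow; lia).
        updsimp. rewrite E. split; [apply DomS_zpow; lia|].
        cbn [snd zpow]. unfold Aval; simpl. lia.
Qed.

Fixpoint Tr (pa pb off F : nat) (p : formula arith_sym) : formula group_sym :=
  match p with
  | FEq t1 t2 => FEx F (FAnd (Val pa pb off t1 F (F+1)) (Val pa pb off t2 F (F+1)))
  | FNot q => FNot (Tr pa pb off F q)
  | FAnd q r => FAnd (Tr pa pb off F q) (Tr pa pb off F r)
  | FOr q r => FOr (Tr pa pb off F q) (Tr pa pb off F r)
  | FImp q r => FImp (Tr pa pb off F q) (Tr pa pb off F r)
  | FEx n q => FEx (off + n) (FAnd (DomF pa pb (off + n) F) (Tr pa pb off F q))
  | FAll n q => FAll (off + n) (FImp (DomF pa pb (off + n) F) (Tr pa pb off F q))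
  end.

Lemma val_upd (off n : nat) (w : nat -> G) (g : G) :
  (fun i => Z.to_nat (snd (upd w (off + n)%nat g (off + i)%nat))) =
  upd (fun i => Z.to_nat (snd (w (off + i)%nat))) n (Z.to_nat (snd g)).
Proof.
  apply functional_extensionality. intros i. unfold upd.
  destruct (Nat.eqb_spec i n), (Nat.eqb_spec (off + i)%nat (off + n)%nat); auto; lia.
Qed.

Lemma in_app_l' {A} (x : A) l1 l2 : In x l1 -> In x (l1 ++ l2).
Proof. intros; apply in_or_app; auto. Qed.
Lemma in_app_r' {A} (x : A) l1 l2 : In x l2 -> In x (l1 ++ l2).
Proof. intros; apply in_or_app; auto. Qed.

Lemma Tr_sat pa pb off F p : forall w, Good pa pb w -> (pa < off)%nat -> (pb < off)%nat -> (off <= F)%nat ->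
  (forall i, In i (fvars p) -> (off + i < F)%nat) ->
  (forall i, In i (fvars p) -> DomS (w (off + i)%nat)) ->
  (sat ZwrZ w (Tr pa pb off F p) <-> sat NatArith (fun i => Z.to_nat (snd (w (off + i)%nat))) p).
Proof.
  induction p as [t1 t2|q IH|q IHq r IHr|q IHq r IHr|q IHq r IHr|n q IH|n q IH];
    intros w Hg Ha Hb HF Hv Hd; cbn -[wr_mul DomF Val].
  - assert (Hgw : forall g, Good pa pb (upd w F g)) by (intros g; apply Good_upd; auto; lia).
    assert (HV : forall g t, (forall i, In i (tvars t) -> In i (tvars t1 ++ tvars t2)) ->
              (sat ZwrZ (upd w F g) (Val pa pb off t F (F+1)) <-> g = zpow (Z.of_nat (Aval off w t)))).
    { intros g t Ht. rewrite Val_sat.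
      - rewrite upd_same, Aval_upd; [tauto|]. intros i Hi. specialize (Hv i (Ht i Hi)). lia.
      - apply Hgw.
      - lia.
      - lia.
      - lia.
      - intros i Hi. split; [specialize (Hv i (Ht i Hi)); lia|]. rewrite upd_other.
        + apply Hd, Ht, Hi.
        + specialize (Hv i (Ht i Hi)). lia. }
    split.
    + intros [g [V1 V2]]. rewrite HV in V1, V2 by (intros; first [solve [apply in_app_l'; auto] | solve [apply in_app_r'; auto]]).
      rewrite V1 in V2. apply zpow_nat_inj in V2. exact V2.
    + intros E. exists (zpow (Z.of_nat (Aval off w t1))).
      rewrite !HV by (intros; first [solve [apply in_app_l'; auto] | solve [apply in_app_r'; auto]]).
      split; auto. f_equal. f_equal. exact E.
  - rewrite IH; auto; tauto.
  - rewrite IHq, IHr; auto; try tauto; intros i Hi; first [apply Hv | apply Hd];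
      first [solve [apply in_app_l'; auto] | solve [apply in_app_r'; auto]].
  - rewrite IHq, IHr; auto; try tauto; intros i Hi; first [apply Hv | apply Hd];
      first [solve [apply in_app_l'; auto] | solve [apply in_app_r'; auto]].
  - rewrite IHq, IHr; auto; try tauto; intros i Hi; first [apply Hv | apply Hd];
      first [solve [apply in_app_l'; auto] | solve [apply in_app_r'; auto]].
  - assert (Hn : (off + n < F)%nat) by (apply Hv; simpl; auto).
    assert (HI : forall g, DomS g -> (sat ZwrZ (upd w (off + n)%nat g) (Tr pa pb off F q) <->
        sat NatArith (upd (fun i => Z.to_nat (snd (w (off + i)%nat))) n (Z.to_nat (snd g))) q)).
    { intros g Dg. rewrite <- val_upd. apply IH; auto.
      - apply Good_upd; auto; lia.
      - intros i Hi. apply Hv. simpl; auto.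
      - intros i Hi. unfold upd. destruct (Nat.eqb_spec (off + i)%nat (off + n)%nat); auto.
        apply Hd. simpl; auto. }
    split.
    + intros [g [D T]]. rewrite DomF_sat in D; [| apply Good_upd; auto; lia | lia | lia | lia].
      rewrite upd_same in D. exists (Z.to_nat (snd g)). apply HI; auto.
    + intros [m T]. exists (zpow (Z.of_nat m)).
      rewrite DomF_sat; [| apply Good_upd; auto; lia | lia | lia | lia].
      rewrite upd_same. assert (D : DomS (zpow (Z.of_nat m))) by (apply DomS_zpow; lia).
      split; auto. apply HI; auto. cbn [snd zpow]. rewrite Nat2Z.id. auto.
  - assert (Hn : (off + n < F)%nat) by (apply Hv; simpl; auto).
    assert (HI : forall g, DomS g -> (sat ZwrZ (upd w (off + n)%nat g) (Tr pa pb off F q) <->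
        sat NatArith (upd (fun i => Z.to_nat (snd (w (off + i)%nat))) n (Z.to_nat (snd g))) q)).
    { intros g Dg. rewrite <- val_upd. apply IH; auto.
      - apply Good_upd; auto; lia.
      - intros i Hi. apply Hv. simpl; auto.
      - intros i Hi. unfold upd. destruct (Nat.eqb_spec (off + i)%nat (off + n)%nat); auto.
        apply Hd. simpl; auto. }
    split.
    + intros T m. specialize (T (zpow (Z.of_nat m))).
      rewrite DomF_sat in T; [| apply Good_upd; auto; lia | lia | lia | lia].
      rewrite upd_same in T. assert (D : DomS (zpow (Z.of_nat m))) by (apply DomS_zpow; lia).
      specialize (T D). apply HI in T; auto. cbn [snd zpow] in T. rewrite Nat2Z.id in T. auto.
    + intros T g D. rewrite DomF_sat in D; [| apply Good_upd; auto; lia | lia | lia | lia].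
      rewrite upd_same in D. apply HI; auto.
Qed.
Arguments wr_mul : simpl never.

Definition FTrue : formula group_sym := FEq (gv 0) (gv 0).

Fixpoint conjs (l : list (formula group_sym)) : formula group_sym :=
  match l with
  | [] => FTrue
  | p :: l' => FAnd p (conjs l')
  end.

Lemma conjs_sat w l : sat ZwrZ w (conjs l) <-> (forall p, In p l -> sat ZwrZ w p).
Proof.
  induction l as [|p l IH]; simpl.
  - split; [tauto|]. intros _. reflexivity.
  - rewrite IH. split.
    + intros [H1 H2] q [<-|Hq]; auto.
    + intros H. split; auto.
Qed.

Lemma conjs_map_sat w (f : nat -> formula group_sym) a k :
  sat ZwrZ w (conjs (map f (seq a k))) <-> (forall i, (a <= i < a + k)%nat -> sat ZwrZ w (f i)).
Proof.
  rewrite conjs_sat. split.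
  - intros H i Hi. apply H. apply in_map. apply in_seq. lia.
  - intros H p Hp. apply in_map_iff in Hp. destruct Hp as [i [<- Hi]]. apply in_seq in Hi. apply H. lia.
Qed.

Fixpoint exs (l : list nat) (p : formula group_sym) : formula group_sym :=
  match l with
  | [] => p
  | n :: l' => FEx n (exs l' p)
  end.

Lemma exs_sat w l p : sat ZwrZ w (exs l p) <->
  exists w', (forall i, ~ In i l -> w' i = w i) /\ sat ZwrZ w' p.
Proof.
  revert w. induction l as [|n l IH]; intros w; simpl.
  - split.
    + intros H. exists w. auto.
    + intros [w' [E H]]. assert (w' = w) by (apply functional_extensionality; auto). subst; auto.
  - split.
    + intros [x H]. apply IH in H. destruct H as [w' [E H]]. exists w'. split; auto.
      intros i Hi. rewrite E by tauto. apply upd_other. intros ->. apply Hi. auto.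
    + intros [w' [E H]]. exists (w' n). apply IH. exists w'. split; auto.
      intros i Hi. unfold upd. destruct (Nat.eqb_spec i n); [subst; auto|]. apply E. intros [?|?]; auto.
Qed.

Fixpoint maxl (l : list nat) : nat :=
  match l with [] => 0%nat | x :: l' => Nat.max x (maxl l') end.

Lemma maxl_in i l : In i l -> (i <= maxl l)%nat.
Proof. induction l; simpl; [tauto|]. intros [->|H]; [lia|]. apply IHl in H. lia. Qed.

Lemma block_map {A} (v : nat -> A) k i : (i < k)%nat -> block 1 i (map v (seq 0 k)) = [v i].
Proof.
  intros H. unfold block. replace (i * 1)%nat with i by lia.
  replace k with (i + S (k - i - 1))%nat by lia. rewrite seq_app, map_app.
  rewrite skipn_app. rewrite length_map, length_seq. rewrite Nat.sub_diag. simpl.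
  rewrite skipn_all2 by (rewrite length_map, length_seq; lia). simpl. reflexivity.
Qed.

Definition final_phi (k : nat) (p : formula arith_sym) : formula group_sym :=
  let pa := k in let pb := S k in let off := (k + 2)%nat in
  let B := S (Nat.max k (maxl (fvars p))) in let F := (off + B)%nat in
  FAnd (conjs (map (fun i => DomF pa pb i F) (seq 0 k)))
   (exs (map (fun i => (off + i)%nat) (seq 0 B))
     (FAnd (conjs (map (fun i => DomF pa pb (off + i)%nat F) (seq 0 B)))
       (FAnd (conjs (map (fun i => FEq (gv (off + i)%nat) (gv i)) (seq 0 k)))
             (Tr pa pb off F p)))).

Lemma in_offs off B i : In i (map (fun j => (off + j)%nat) (seq 0 B)) <-> (off <= i < off + B)%nat.
Proof.
  rewrite in_map_iff. split.
  - intros [j [<- Hj]]. apply in_seq in Hj. lia.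
  - intros H. exists (i - off)%nat. split; [lia|]. apply in_seq. lia.
Qed.

Lemma final_phi_sat k p (X : list nat -> Prop)
  (HX : forall v, X (map v (seq 0 k)) <-> sat NatArith v p) (w : nat -> G) :
  w k = wr_a -> w (S k) = wr_b ->
  (sat ZwrZ w (final_phi k p) <->
   (forall i, (i < k)%nat -> DomS (w i)) /\ X (map (fun i => Z.to_nat (snd (w i))) (seq 0 k))).
Proof.
  intros Ha Hb. unfold final_phi.
  set (B := S (Nat.max k (maxl (fvars p)))). set (off := (k + 2)%nat). set (F := (off + B)%nat).
  assert (HvB : forall i, In i (fvars p) -> (i < B)%nat) by (intros i Hi; apply maxl_in in Hi; lia).
  cbn [sat]. rewrite conjs_map_sat, exs_sat.
  assert (HD : forall w0, Good k (S k) w0 -> forall i, (i < F)%nat ->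
            (sat ZwrZ w0 (DomF k (S k) i F) <-> DomS (w0 i))).
  { intros w0 Hg i Hi. apply DomF_sat; auto; lia. }
  assert (Hg : Good k (S k) w) by (split; auto).
  split.
  - intros [HD1 [w' [E [H1 [H2 H3]]]]].
    assert (E' : forall i, (i < off)%nat -> w' i = w i).
    { intros i Hi. apply E. rewrite in_offs. lia. }
    assert (Hg' : Good k (S k) w') by (split; rewrite E'; auto; lia).
    rewrite conjs_map_sat in H1, H2.
    assert (D' : forall i, (i < B)%nat -> DomS (w' (off + i)%nat)).
    { intros i Hi. apply (HD w' Hg'); [lia|]. apply H1. lia. }
    assert (Q : forall i, (i < k)%nat -> w' (off + i)%nat = w i).
    { intros i Hi. specialize (H2 i ltac:(lia)). cbn in H2. rewrite H2. apply E'. lia. }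
    split.
    + intros i Hi. apply (HD w Hg); [lia|]. apply HD1. lia.
    + rewrite (Tr_sat k (S k) off F p w') in H3;
        [ | auto | lia | lia | lia | intros i Hi; apply HvB in Hi; lia | intros i Hi; apply D'; apply HvB; auto].
      apply HX in H3. erewrite map_ext_in; [exact H3|].
        intros i Hi. apply in_seq in Hi. cbv beta. rewrite Q by lia. reflexivity.
  - intros [HD1 HXw].
    set (w' := fun j => if andb (Nat.leb off j) (Nat.ltb j (off + B)) then
                 (if Nat.ltb (j - off) k then w (j - off)%nat else zpow 0) else w j).
    assert (E : forall i, ~ In i (map (fun j => (off + j)%nat) (seq 0 B)) -> w' i = w i).
    { intros i Hi. rewrite in_offs in Hi. unfold w'.
      destruct (Nat.leb_spec off i), (Nat.ltb_spec i (off + B)); simpl; auto; lia. }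
    assert (Q : forall i, (i < B)%nat -> w' (off + i)%nat = if Nat.ltb i k then w i else zpow 0).
    { intros i Hi. unfold w'. destruct (Nat.leb_spec off (off + i)), (Nat.ltb_spec (off + i) (off + B)); try lia.
      simpl. replace (off + i - off)%nat with i by lia. reflexivity. }
    assert (E' : forall i, (i < off)%nat -> w' i = w i).
    { intros i Hi. apply E. rewrite in_offs. lia. }
    assert (Hg' : Good k (S k) w') by (split; rewrite E'; auto; lia).
    assert (D' : forall i, (i < B)%nat -> DomS (w' (off + i)%nat)).
    { intros i Hi. rewrite Q by auto. destruct (Nat.ltb_spec i k); [apply HD1; auto|].
      apply DomS_zpow. lia. }
    split.
    + intros i Hi. apply (HD w Hg); [lia|]. apply HD1. lia.
    + exists w'. split; [exact E|].
      split; [rewrite conjs_map_sat; intros i Hi; apply (HD w' Hg'); [lia|]; apply D'; lia|].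
      split.
      * rewrite conjs_map_sat. intros i Hi. cbn. rewrite Q by lia. rewrite E' by lia.
        destruct (Nat.ltb_spec i k); [reflexivity|lia].
      * rewrite (Tr_sat k (S k) off F p w');
          [ | auto | lia | lia | lia | intros i Hi; apply HvB in Hi; lia | intros i Hi; apply D'; apply HvB; auto].
        apply HX. erewrite map_ext_in; [exact HXw|].
        intros i Hi. apply in_seq in Hi. cbv beta. rewrite Q by lia. destruct (Nat.ltb_spec i k); [reflexivity|lia].
Qed.

Theorem lemma5p1 : interpretation NatArith ZwrZ 1 dom_apow f_apow.
Proof.
  split; [|split].
  - intros x [n ->]. reflexivity.
  - intros m. exists [wr_pow wr_a m]. split; [exists m; auto|].
    simpl. rewrite wr_pow_a. unfold apow; simpl. apply Nat2Z.id.
  - intros k X [p HX]. exists (final_phi k p), [wr_a; wr_b]. intros v Hv.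
    simpl in Hv. replace (k + 0)%nat with k in Hv by lia. injection Hv as Ha Hb.
    replace (1 * k)%nat with k by lia.
    rewrite (final_phi_sat k p X HX v Ha Hb).
    split.
    + intros [H1 H2]. split.
      * intros i Hi. specialize (H1 i Hi). rewrite block_map in H1 by auto. apply dom_apow_iff; auto.
      * erewrite map_ext_in; [exact H2|]. intros i Hi. apply in_seq in Hi. cbv beta. rewrite block_map by lia. reflexivity.
    + intros [H1 H2]. split.
      * intros i Hi. rewrite block_map by auto. apply dom_apow_iff; auto.
      * erewrite map_ext_in; [exact H2|]. intros i Hi. apply in_seq in Hi. cbv beta. rewrite block_map by lia. reflexivity.
Qed.
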